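(* Consider two settings $(a,c,P,\phi)$ and $(a',c',P',\phi)$ as described in the context. Suppose $a\ge a'$, $c\le c'$, and either $\widetilde P\ge_{FOSD}\widetilde{P'}$ (for the degree marginals) or the degree marginal of $P$ is a mean-preserving spread of that of $P'$, with at least one of these relations strict. Then for every $\theta_i\in\Theta$ and all $d_i>d_i'$ in $D$, $$x^{friend}_{a,c,P}(\theta_i,d_i)-x^{friend}_{a,c,P}(\theta_i,d_i')>x^{friend}_{a',c',P'}(\theta_i,d_i)-x^{friend}_{a',c',P'}(\theta_i,d_i')$$ and $$U^{friend}_{a,c,P}(\theta_i,d_i)-U^{friend}_{a,c,P}(\theta_i,d_i')>U^{friend}_{a',c',P'}(\theta_i,d_i)-U^{friend}_{a',c',P'}(\theta_i,d_i').$$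
   Context: Fix an integer $n\ge2$, $\phi\in\mathbb{R}$, a compact set $\Theta\subset[0,\infty)$ of types, and $D=\{1,\dots,n-1\}$. A setting $(a,c,P,\phi)$ consists of $a>0$, $c>0$ and a probability distribution $P$ on $\Theta\times D$ (joint type/degree distribution of a generic potential neighbor); $\mathrm{E}_P$ is expectation under $P$, and the neighbor distribution $\widetilde P$ is given by $\widetilde{\mathrm{E}}_P[h(\theta,d)]=\mathrm{E}_P[d\,h(\theta,d)]/\mathrm{E}_P[d]$. In each of the two settings assume $c>a\,\widetilde{\mathrm{E}}_P[d]$ and $\widetilde{\mathrm{E}}_P[\theta]=\mathrm{E}_P[\theta]$; the type marginals of $P$ and $P'$ coincide and put positive probability on $\theta>0$. A strategy is a bounded measurable $x:\Theta\times D\to[0,\infty)$, used by all agents; in the friend game of a setting, an agent of type $\theta_i$ and degree $d_i$ choosing $y\ge0$ when others use $x$ gets $EU^{friend}(y;\theta_i,d_i;x)=\theta_i y+a\,y\,d_i\widetilde{\mathrm{E}}_P[x(\theta,d)]-\frac{c}{2}y^2+\phi(n-1)\mathrm{E}_P[x(\theta,d)]$. A Bayesian equilibrium is a strategy $x$ such that for every $(\theta_i,d_i)$, $x(\theta_i,d_i)$ maximizes this payoff over $y\ge0$ given others use $x$; it exists and is unique, and is denoted $x^{friend}_{a,c,P}$. Let $U^{friend}_{a,c,P}(\theta_i,d_i)=EU^{friend}(x^{friend}_{a,c,P}(\theta_i,d_i);\theta_i,d_i;x^{friend}_{a,c,P})$. $\ge_{FOSD}$ denotes first-order stochastic dominance.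 *)

(* Defs.v *)
From HB Require Import structures.
From mathcomp Require Import all_boot all_order all_algebra.
From mathcomp Require Import all_classical all_reals all_analysis.
Set Implicit Arguments. Unset Strict Implicit. Unset Printing Implicit Defensive.
Import Order.TTheory GRing.Theory Num.Theory.
Import numFieldNormedType.Exports.
Local Open Scope classical_set_scope.
Local Open Scope ring_scope.

(* A generic potential neighbor is a pair z = (theta, d) : R * R;
   z.1 is the type, z.2 the degree.  P is a probability on R * R
   (Borel product sigma-algebra) supported on Theta x D. *)

Section Defs.
Variable R : realType.
Notation prob := (probability (R * R)%type R).

Definition degset (n : nat) : set R :=
  [set d | exists k : nat, (1 <= k)%N /\ (k <= n.-1)%N /\ d = k%:R].

Definition Ex (P : prob) (h : R * R -> R) : R :=
  fine (\int[P]_z (h z)%:E).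

(* neighbor expectation: Ẽ_P[h] = E_P[d h] / E_P[d] *)
Definition Ext (P : prob) (h : R * R -> R) : R :=
  Ex P (fun z => z.2 * h z) / Ex P (fun z => z.2).

Definition setting (Theta : set R) (n : nat) (a c : R) (P : prob) : Prop :=
  [/\ 0 < a /\ 0 < c,
      P (Theta `*` degset n) = 1%E,
      a * Ext P snd < c,
      Ext P fst = Ex P fst
    & (0 < P [set z : R * R | (0 < z.1)%R])%E].

(* a strategy: bounded measurable x : Theta x D -> [0, oo)
   (represented as a measurable function on R * R; only its values on
   Theta x D matter) *)
Definition strategy (Theta : set R) (n : nat) (x : R * R -> R) : Prop :=
  [/\ measurable_fun setT x,
      (exists M : R, forall z, (Theta `*` degset n) z -> `|x z| <= M)
    & forall z, (Theta `*` degset n) z -> 0 <= x z].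

Definition EUfriend (n : nat) (a c phi : R) (P : prob) (x : R * R -> R)
  (thi di y : R) : R :=
  thi * y + a * y * di * Ext P x - c / 2 * y ^+ 2 + phi * (n.-1)%:R * Ex P x.

Definition friend_eq (Theta : set R) (n : nat) (a c phi : R) (P : prob)
  (x : R * R -> R) : Prop :=
  strategy Theta n x /\
  forall thi di, Theta thi -> degset n di ->
    forall y, 0 <= y ->
      EUfriend n a c phi P x thi di y <= EUfriend n a c phi P x thi di (x (thi, di)).

Definition Ufriend (n : nat) (a c phi : R) (P : prob) (x : R * R -> R)
  (thi di : R) : R :=
  EUfriend n a c phi P x thi di (x (thi, di)).

Definition ind_ge (t : R) (z : R * R) : R := ((t <= z.2)%R : bool)%:R.

Definition fosd_tilde (P P' : prob) : Prop :=
  forall t : R, Ext P' (ind_ge t) <= Ext P (ind_ge t).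
Definition strict_fosd_tilde (P P' : prob) : Prop :=
  fosd_tilde P P' /\ exists t : R, Ext P' (ind_ge t) < Ext P (ind_ge t).

Definition convex_fun (f : R -> R) : Prop :=
  forall u v t : R, 0 <= t <= 1 ->
    f (t * u + (1 - t) * v) <= t * f u + (1 - t) * f v.

(* degree marginal of P is a mean-preserving spread of that of P'
   (Rothschild-Stiglitz: same mean, larger in the convex order) *)
Definition mps (P P' : prob) : Prop :=
  Ex P snd = Ex P' snd /\
  forall f : R -> R, convex_fun f -> Ex P' (fun z => f z.2) <= Ex P (fun z => f z.2).
Definition strict_mps (P P' : prob) : Prop :=
  mps P P' /\ exists t : R, Ex P (ind_ge t) <> Ex P' (ind_ge t).

End Defs.

(* Main.v *)
Require Import Defs.
From HB Require Import structures.
From mathcomp Require Import all_boot all_order all_algebra.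
From mathcomp Require Import all_classical all_reals all_analysis.
From mathcomp Require Import measurable_realfun.
From mathcomp Require Import ring lra.
Import Order.TTheory GRing.Theory Num.Theory.
Import numFieldNormedType.Exports.
Local Open Scope classical_set_scope.
Local Open Scope ring_scope.

Section ExLemmas.
Variables (R : realType) (P : probability (R * R)%type R) (S : set (R * R)).
Hypotheses (mS : measurable S) (PS : P S = 1%E).

Definition good (h : R * R -> R) :=
  measurable_fun setT h /\ exists M, forall z, S z -> `|h z| <= M.

Lemma PSC : P (~` S) = 0%E.
Proof. by rewrite probability_setC // PS subee. Qed.

Lemma aeS (Q : R * R -> Prop) : (forall z, S z -> Q z) -> \forall z \ae P, Q z.
Proof.
move=> HQ; exists (~` S); split => //; first exact: measurableC.
  exact: PSC.
by move=> z /= nQ; apply: contra_not nQ => /HQ.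
Qed.

Lemma Ex_ext h g : measurable_fun setT h -> measurable_fun setT g ->
  (forall z, S z -> h z = g z) -> Ex P h = Ex P g.
Proof.
move=> mh mg hg; rewrite /Ex; congr fine.
apply: ae_eq_integral => //; try exact/measurable_EFinP.
exists (~` S); split => //; first exact: measurableC.
  exact: PSC.
by move=> z /= nq Sz; apply: nq => _; rewrite hg.
Qed.

Lemma good_int {h} : good h -> P.-integrable setT (EFin \o h).
Proof.
case=> mh [M hM]; apply/integrableP; split; first exact/measurable_EFinP.
have H : (\int[P]_x `|(EFin \o h) x| <= \int[P]_z (cst (`|M|%:E) z))%E.
  apply: ae_ge0_le_integral => //.
  - by apply: measurableT_comp => //; exact/measurable_EFinP.
  - by move=> z _; rewrite /= lee_fin normr_ge0.
  - apply: (@aeS (fun x => setT x -> (`|(EFin \o h) x| <= cst `|M|%:E x)%E)) => z Sz _.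
    rewrite /= lee_fin.
    exact: (le_trans (hM z Sz) (ler_norm M)).
apply: le_lt_trans H _.
rewrite integral_cst // [X in (_ * X)%E](_ : _ = 1%E) ?mule1 ?ltry //; exact: probability_setT.
Qed.

Lemma Ex_add h g : good h -> good g ->
  Ex P (fun z => h z + g z) = Ex P h + Ex P g.
Proof.
move=> gh gg; rewrite /Ex.
under eq_integral do rewrite EFinD.
rewrite (integralD measurableT (good_int gh) (good_int gg)).
rewrite fineD //; exact: integrable_fin_num (good_int _).
Qed.

Lemma Ex_scale k h : good h -> Ex P (fun z => k * h z) = k * Ex P h.
Proof.
move=> gh; rewrite /Ex.
under eq_integral do rewrite EFinM.
rewrite (integralZl measurableT (good_int gh)).
rewrite fineM //; exact: integrable_fin_num (good_int _).
Qed.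

Lemma Ex_cst k : Ex P (fun _ => k) = k.
Proof.
rewrite /Ex (integral_cst P measurableT k%:E).
by rewrite [X in (_ * X)%E](_ : _ = 1%E) ?mule1 //; exact: probability_setT.
Qed.

Lemma Ex_ge0 (f : R * R -> R) : measurable_fun setT f -> (forall z, S z -> 0 <= f z) ->
  0 <= Ex P f.
Proof.
move=> mf f0.
rewrite (@Ex_ext f (fun z => Num.max (f z) 0)) //.
- apply: fine_ge0; apply: integral_ge0 => z _.
  by rewrite lee_fin le_max lexx orbT.
- by apply: measurable_maxr.
- by move=> z Sz; rewrite max_l // f0.
Qed.

Lemma good_cst k : good (fun _ => k).
Proof. by split; [exact: measurable_cst | exists `|k|]. Qed.

Lemma good_add {h g : R * R -> R} : good h -> good g -> good (fun z => h z + g z).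
Proof.
case=> mh [M1 h1] [mg [M2 h2]]; split; first exact: measurable_funD.
exists (M1 + M2) => z Sz; rewrite (le_trans (ler_normD _ _)) //.
by rewrite lerD // ?h1 ?h2.
Qed.

Lemma good_mul {h g : R * R -> R} : good h -> good g -> good (fun z => h z * g z).
Proof.
case=> mh [M1 h1] [mg [M2 h2]]; split; first exact: measurable_funM.
exists (M1 * M2) => z Sz; rewrite normrM.
by apply: ler_pM => //; [exact: h1 | exact: h2].
Qed.

Lemma good_scale k {h : R * R -> R} : good h -> good (fun z => k * h z).
Proof. by move=> gh; apply: good_mul => //; exact: good_cst. Qed.

Lemma Ex_le (h g : R * R -> R) : good h -> good g -> (forall z, S z -> h z <= g z) ->
  Ex P h <= Ex P g.
Proof.
move=> gh gg hg.
have : 0 <= Ex P (fun z => g z + (-1) * h z).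
  apply: Ex_ge0; first by case: (good_add gg (good_scale (-1) gh)).
  by move=> z Sz; rewrite mulN1r subr_ge0 hg.
by rewrite Ex_add ?Ex_scale // ?mulN1r ?subr_ge0 //; exact: good_scale.
Qed.

Lemma good_sum (f : nat -> R * R -> R) N : (forall k, good (f k)) ->
  good (fun z => \sum_(k < N) f k z).
Proof.
move=> gf; elim: N => [|N IH].
  by rewrite (_ : (fun _ => _) = fun _ => 0); [exact: good_cst|
    apply: funext => z; rewrite big_ord0].
rewrite (_ : (fun _ => _) = fun z => \sum_(k < N) f k z + f N z).
  exact: good_add.
by apply: funext => z; rewrite big_ord_recr.
Qed.

Lemma Ex_sum (f : nat -> R * R -> R) N : (forall k, good (f k)) ->
  Ex P (fun z => \sum_(k < N) f k z) = \sum_(k < N) Ex P (f k).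
Proof.
move=> gf; elim: N => [|N IH].
  rewrite big_ord0 (_ : (fun _ => _) = fun _ => 0) ?Ex_cst //.
  by apply: funext => z; rewrite big_ord0.
rewrite (_ : (fun _ => _) = fun z => \sum_(k < N) f k z + f N z).
  by rewrite Ex_add ?IH ?big_ord_recr //; exact: good_sum.
by apply: funext => z; rewrite big_ord_recr.
Qed.

End ExLemmas.
Arguments Ex_cst {R} P k.
Arguments good_cst {R S} k.
Arguments good_add {R S h g}.
Arguments good_mul {R S h g}.
Arguments good_scale {R S} k {h}.
Arguments good_sum {R S} f N.
Arguments good_int {R P S} mS PS {h}.
Section Support.
Variables (R : realType) (n : nat) (Theta : set R).
Hypotheses (hn : (2 <= n)%N) (cT : compact Theta) (T0 : Theta `<=` `[0, +oo[).

Definition Sset : set (R * R) := Theta `*` @degset R n.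

Lemma degset_meas : measurable (degset n : set R).
Proof.
rewrite (_ : degset n = \bigcup_(k in [set k : nat | (1 <= k)%N /\ (k <= n.-1)%N])
   [set (k%:R : R)]).
  by apply: bigcup_measurable => k _; exact: measurable_set1.
apply/seteqP; split => d /=.
  by move=> [k [h1 [h2 ->]]]; exists k.
by move=> [k [h1 h2] ->]; exists k.
Qed.

Lemma mSset : measurable Sset.
Proof.
apply: measurableX; last exact: degset_meas.
by apply: closed_measurable; apply: compact_closed => //; exact: hausdorff_space.
Qed.

Lemma SsetP z : Sset z -> [/\ Theta z.1, 0 <= z.1 &
  exists j : nat, [/\ (1 <= j)%N, (j <= n.-1)%N & z.2 = j%:R]].
Proof.
case=> h1 [j [j1 [j2 ->]]]; split => //; last by exists j.
by have := T0 _ h1; rewrite /= in_itv /= andbT.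
Qed.

Lemma Theta_bnd : exists M : R, forall t, Theta t -> `|t| <= M.
Proof.
case: (compact_bounded cT) => M [_ HM].
by exists (M + 1) => t Tt; apply: (HM (M + 1)) => //; rewrite ltrDl.
Qed.

Lemma snd_bnd z : Sset z -> `|z.2| <= n%:R.
Proof.
move=> /SsetP[_ _ [j [_ hj ->]]]; rewrite normr_nat ler_nat.
by apply: leq_trans hj (leq_pred _).
Qed.

End Support.
Arguments Sset {R}.
Arguments mSset {R n Theta}.
Arguments SsetP {R n Theta} T0 {z}.
Arguments Theta_bnd {R Theta}.
Arguments snd_bnd {R n Theta} T0 {z}.
Arguments degset_meas {R}.
Lemma m_ind (R : realType) (t : R) : measurable_fun setT (@ind_ge R t).
Proof.
rewrite (_ : ind_ge t = \1_[set z : R * R | t <= z.2]).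
  apply: measurable_indic.
  rewrite (_ : [set z : R * R | t <= z.2] = setT `&` (snd @^-1` `[t, +oo[)).
    by apply: measurable_snd => //; exact: measurable_itv.
  apply/seteqP; split => z /= h.
    by split => //=; rewrite in_itv /= andbT.
  by case: h => _; rewrite /= in_itv /= andbT.
apply: funext => z; rewrite /ind_ge indicE.
by case: (boolP (t <= z.2)) => h; [rewrite mem_set | rewrite memNset //; apply/negP].
Qed.

Section Model.
Variables (R : realType) (n : nat) (phi : R) (Theta : set R) (a c : R).
Variables (P : probability (R * R)%type R) (x : R * R -> R).
Hypotheses (hn : (2 <= n)%N) (cT : compact Theta) (T0 : Theta `<=` `[0, +oo[).
Hypotheses (st : setting Theta n a c P) (eqx : friend_eq Theta n a c phi P x).

Let S := Sset n Theta.
Let mS : measurable S := mSset cT.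
Let PS : P S = 1%E. Proof. by case: st. Qed.

Let Eext := @Ex_ext R P S mS PS.
Let Eadd := @Ex_add R P S mS PS.
Let Escale := @Ex_scale R P S mS PS.
Let Ege0 := @Ex_ge0 R P S mS PS.
Let Ele := @Ex_le R P S mS PS.
Let Esum := @Ex_sum R P S mS PS.

Lemma g_fst : good R S fst.
Proof.
split; first exact: measurable_fst.
case: (Theta_bnd cT) => M hM; exists M => z /(SsetP T0)[h1 _ _]; exact: hM.
Qed.

Lemma g_snd : good R S snd.
Proof.
split; first exact: measurable_snd.
by exists n%:R => z Sz; exact: (snd_bnd T0).
Qed.

Lemma g_x : good R S x.
Proof. by case: eqx => -[mx [M hM] _] _; split => //; exists M. Qed.

Lemma g_ind t : good R S (ind_ge t).
Proof.
split; first exact: m_ind.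
by exists 1 => z _; rewrite /ind_ge; case: (t <= z.2); rewrite normr_nat.
Qed.

Lemma g_maxk (k : R) : good R S (fun z => Num.max (z.2 - k) 0).
Proof.
split.
  apply: measurable_maxr; last exact: measurable_cst.
  by apply: measurable_funB => //; exact: measurable_cst.
exists (n%:R + `|k|) => z Sz.
rewrite ger0_norm; last by rewrite le_max lexx orbT.
rewrite ge_max; apply/andP; split.
  apply: lerD; last by rewrite -normrN ler_norm.
  exact: le_trans (ler_norm _) (snd_bnd T0 Sz).
by apply: addr_ge0.
Qed.

Lemma g_pos1 : good R S (fun z => Num.max z.1 0).
Proof.
split; first by apply: measurable_maxr; [exact: measurable_fst | exact: measurable_cst].
case: (Theta_bnd cT) => M hM; exists M => z /(SsetP T0)[h1 h0 _].
by rewrite max_l // hM.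
Qed.

Lemma m_ge1 : 1 <= Ex P (fun z => z.2).
Proof.
rewrite -[X in X <= _](Ex_cst P 1).
apply: Ele; [exact: good_cst | exact: g_snd |].
by move=> z /(SsetP T0)[_ _ [j [j1 _ ->]]]; rewrite ler1n.
Qed.

Lemma q_ge1 : 1 <= Ex P (fun z => z.2 * z.2).
Proof.
rewrite -[X in X <= _](Ex_cst P 1).
apply: Ele; [exact: good_cst | exact: good_mul g_snd g_snd |].
by move=> z /(SsetP T0)[_ _ [j [j1 _ ->]]]; rewrite -natrM ler1n muln_gt0 j1.
Qed.

Lemma s_pos : 0 < Ext P snd.
Proof.
apply: divr_gt0; first exact: lt_le_trans ltr01 q_ge1.
exact: lt_le_trans ltr01 m_ge1.
Qed.

Lemma X_ge0 : 0 <= Ext P x.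
Proof.
apply: divr_ge0; last exact: le_trans ler01 m_ge1.
apply: Ege0; first by apply: measurable_funM; [exact: measurable_snd|case: g_x].
move=> z Sz; have [_ _ [j [j1 _ ->]]] := SsetP T0 Sz.
by apply: mulr_ge0 => //; case: eqx => -[_ _ +] _; apply.
Qed.

Lemma e_pos : 0 < Ex P fst.
Proof.
have E1 : Ex P fst = Ex P (fun z => Num.max z.1 0).
  apply: Eext; [exact: measurable_fst | by case: g_pos1 |].
  by move=> z /(SsetP T0)[_ h0 _]; rewrite max_l.
have e0 : 0 <= Ex P fst.
  by rewrite E1; apply: Ege0; [case: g_pos1 | move=> z _; rewrite le_max lexx orbT].
rewrite lt_neqAle e0 andbT; apply/eqP => e00.
have intf := good_int mS PS g_pos1.
have fin := integrable_fin_num measurableT intf.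
have I0 : (\int[P]_z ((Num.max z.1 0)%:E) = 0)%E.
  by rewrite -(fineK fin) /= -[fine _]/(Ex P _) -E1 -e00.
have : ae_eq P setT (EFin \o (fun z => Num.max z.1 0)) (cst 0%E).
  apply/ae_eq_integral_abs => //; first by apply/measurable_EFinP; case: g_pos1.
  rewrite -I0; apply: eq_integral => z _ /=.
  by rewrite ger0_norm // le_max lexx orbT.
case=> N [mN PN sub].
have mpos : measurable [set z : R * R | 0 < z.1].
  rewrite (_ : [set z : R * R | 0 < z.1] = setT `&` (fst @^-1` `]0, +oo[)).
    by apply: measurable_fst => //; exact: measurable_itv.
  apply/seteqP; split => z /= h.
    by split => //=; rewrite in_itv /= andbT.
  by case: h => _; rewrite /= in_itv /= andbT.
have P0 : P [set z : R * R | 0 < z.1] = 0%E.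
  apply: (subset_measure0 mpos mN) => // z /= z0; apply: sub => /=.
  move=> /(_ I) [] /eqP; rewrite max_l ?(ltW z0) //.
  by rewrite gt_eqF.
by case: st => _ _ _ _; rewrite P0 ltxx.
Qed.


Lemma x_form thi di : Theta thi -> degset n di ->
  x (thi, di) = (thi + a * di * Ext P x) / c.
Proof.
move=> Tt Dd.
have [[mx _ x0] opt] := eqx.
have [[a0 c0] _ _ _ _] := st.
have Xge0 := X_ge0.
have t0 : 0 <= thi by have := T0 _ Tt; rewrite /= in_itv /= andbT.
have d0 : 0 <= di by case: Dd => j [_ [_ ->]].
set X := Ext P x in Xge0 *.
set y0 := (thi + a * di * X) / c.
have y00 : 0 <= y0.
  apply: divr_ge0 (ltW c0); apply: addr_ge0 t0 _.
  by apply: mulr_ge0 Xge0; apply: mulr_ge0 (ltW a0) d0.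
have H := opt thi di Tt Dd y0 y00; rewrite /EUfriend -/X in H.
have hw : thi + a * di * X = c * y0 by rewrite /y0; field; rewrite gt_eqF.
have ht : thi = c * y0 - a * di * X by rewrite -hw; ring.
set xv := x (thi, di) in H *.
set K := phi * _ * _ in H.
have E : (thi * xv + a * xv * di * X - c / 2 * xv ^+ 2 + K) -
   (thi * y0 + a * y0 * di * X - c / 2 * y0 ^+ 2 + K) = - (c / 2 * (xv - y0) ^+ 2).
  by rewrite ht; field.
have h3 : c / 2 * (xv - y0) ^+ 2 <= 0 by lra.
have h4 : (xv - y0) ^+ 2 == 0.
  by rewrite eq_le sqr_ge0 andbT -(pmulr_rle0 _ (_ : 0 < c / 2)) // divr_gt0.
by move: h4; rewrite sqrf_eq0 subr_eq0 => /eqP.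
Qed.

Lemma X_val : Ext P x = Ex P fst / (c - a * Ext P snd).
Proof.
have [[a0 c0] _ hs hfst _] := st.
have m1 := m_ge1.
set X := Ext P x.
set e := Ex P fst.
set m := Ex P (fun z => z.2) in m1.
set q := Ex P (fun z => z.2 * z.2).
have hx z : S z -> z.2 * x z = (1 / c) * (z.2 * z.1) + (a * X / c) * (z.2 * z.2).
  move=> Sz; have [h1 _ [j [j1 j2 hj]]] := SsetP T0 Sz.
  case: z Sz h1 hj => t d Sz /= h1 hj.
  rewrite x_form //; last by exists j; split => //; split.
  by rewrite -/X; field; rewrite gt_eqF.
have gdf : good R S (fun z => z.2 * z.1) by apply: good_mul; [exact: g_snd|exact: g_fst].
have gdd : good R S (fun z => z.2 * z.2) by apply: good_mul; exact: g_snd.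
have E1 : Ex P (fun z => z.2 * x z) = (1 / c) * Ex P (fun z => z.2 * z.1) + (a * X / c) * q.
  rewrite (Eext _ _ _ _ hx); first by rewrite Eadd ?Escale //; exact: good_scale.
    by apply: measurable_funM; [exact: measurable_snd | case: g_x].
  by case: (good_add (good_scale (1 / c) gdf) (good_scale (a * X / c) gdd)).
have E2 : Ex P (fun z => z.2 * z.1) = e * m.
  rewrite /e -hfst /Ext -/m divfK // gt_eqF //.
  exact: lt_le_trans ltr01 m1.
have hX : X = ((1 / c) * (e * m) + (a * X / c) * q) / m by rewrite -E2 -E1.
have sv : Ext P snd = q / m by [].
have m0 : m != 0 by rewrite gt_eqF // (lt_le_trans ltr01 m1).
have cs : c - a * Ext P snd != 0 by rewrite gt_eqF // subr_gt0.
have : X * (c - a * Ext P snd) = e.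
  have h1 : X * c = e + a * X * (q / m).
    by rewrite {1}hX; field; rewrite m0 gt_eqF.
  by rewrite sv mulrBr h1; ring.
by move=> <-; rewrite mulfK.
Qed.

End Model.
Arguments g_snd {R n Theta} T0.
Arguments g_maxk {R n Theta} T0 k.
Arguments g_ind {R} n Theta t.
Arguments g_fst {R n Theta} cT T0.
Arguments m_ind {R} t.
From mathcomp Require Import zify.

Lemma cnt N j : (\sum_(k < N) (k.+1 <= j : nat) = minn N j)%N.
Proof.
elim: N => [|N IH]; first by rewrite big_ord0 min0n.
by rewrite big_ord_recr /= IH; case: leqP => h; lia.
Qed.

Lemma sqid N j : (j <= N.+1)%N -> (j * j = j + 2 * \sum_(k < N) (j - k.+1))%N.
Proof.
elim: j => [|j IH] hj.
  by rewrite big1 // => k _; rewrite sub0n.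
have -> : (\sum_(k < N) (j.+1 - k.+1) = \sum_(k < N) (j - k.+1) + \sum_(k < N) (k.+1 <= j : nat))%N.
  rewrite -big_split /=; apply: eq_bigr => k _; case: leqP => h; lia.
rewrite cnt; have := IH (ltnW hj); lia.
Qed.

Lemma maxnat (R : realType) (p q : nat) : Num.max (p%:R - q%:R) 0 = (p - q)%:R :> R.
Proof.
case: (leqP q p) => h.
  by rewrite max_l -?natrB // subr_ge0 ler_nat.
rewrite max_r; last by rewrite subr_le0 ler_nat ltnW.
by rewrite (_ : p - q = 0)%N //; lia.
Qed.
Section Deg.
Variables (R : realType) (n : nat) (Theta : set R) (P : probability (R * R)%type R).
Hypotheses (hn : (2 <= n)%N) (cT : compact Theta) (T0 : Theta `<=` `[0, +oo[).
Hypothesis PS : P (Sset n Theta) = 1%E.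

Let S := Sset n Theta.
Let mS : measurable S := mSset cT.
Let Eext := @Ex_ext R P S mS PS.
Let Eadd := @Ex_add R P S mS PS.
Let Escale := @Ex_scale R P S mS PS.
Let Esum := @Ex_sum R P S mS PS.
Let gmax := @g_maxk R n Theta T0.
Let gsnd := @g_snd R n Theta T0.

Lemma s_sum : Ext P snd = \sum_(k < n.-1) Ext P (ind_ge (k.+1)%:R).
Proof.
rewrite /Ext -mulr_suml; congr (_ / _).
rewrite -(Esum (fun k z => z.2 * ind_ge (k.+1)%:R z)); last first.
  by move=> k; apply: good_mul; [exact: gsnd | exact: g_ind].
apply: Eext.
- by apply: measurable_funM; exact: measurable_snd.
- by case: (good_sum (fun k z => z.2 * ind_ge (k.+1)%:R z) n.-1 (fun k =>
    good_mul (gsnd) (g_ind n Theta (k.+1)%:R))).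
move=> z /(SsetP T0)[_ _ [j [j1 j2 hj]]].
rewrite -mulr_sumr; congr (_ * _); rewrite /ind_ge hj.
under eq_bigr do rewrite ler_nat.
by rewrite -natr_sum cnt; congr (_%:R); lia.
Qed.

Lemma q_id : Ex P (fun z => z.2 * z.2) =
  Ex P (fun z => z.2) + 2 * \sum_(k < n.-1) Ex P (fun z => Num.max (z.2 - (k.+1)%:R) 0).
Proof.
have gm := fun k : nat => gmax (k.+1)%:R.
transitivity (Ex P (fun z => z.2 + 2 * \sum_(k < n.-1) Num.max (z.2 - (k.+1)%:R) 0)); last first.
  rewrite Eadd; last 2 first.
  - exact: gsnd.
  - by apply: good_scale; exact: (good_sum (fun k z => Num.max (z.2 - (k.+1)%:R) 0) n.-1 gm).
  rewrite Escale; last exact: (good_sum (fun k z => Num.max (z.2 - (k.+1)%:R) 0) n.-1 gm).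
  by rewrite (Esum (fun k z => Num.max (z.2 - (k.+1)%:R) 0) n.-1 gm).
apply: Eext.
- by apply: measurable_funM; exact: measurable_snd.
- by case: (good_add (gsnd) (good_scale 2 (good_sum _ n.-1 gm))).
move=> z /(SsetP T0)[_ _ [j [j1 j2 hj]]].
rewrite hj; under eq_bigr do rewrite maxnat.
rewrite -natr_sum -!natrM -natrD; congr (_%:R).
apply: sqid; lia.
Qed.

Lemma pi0 : Ex P (fun z => Num.max (z.2 - 0%:R) 0) = Ex P (fun z => z.2).
Proof.
apply: Eext; [by case: (gmax 0%:R) | exact: measurable_snd |].
move=> z /(SsetP T0)[_ _ [j [j1 j2 hj]]].
by rewrite hj subr0 max_l.
Qed.

Lemma ind_pi t K : (1 <= K)%N ->
  (forall j : nat, (1 <= j)%N -> (t <= j%:R) = (K <= j)%N) ->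
  Ex P (ind_ge t) = Ex P (fun z => Num.max (z.2 - (K.-1)%:R) 0) -
                    Ex P (fun z => Num.max (z.2 - K%:R) 0).
Proof.
move=> K1 hK.
transitivity (Ex P (fun z => Num.max (z.2 - (K.-1)%:R) 0 + (-1) * Num.max (z.2 - K%:R) 0)); last first.
  rewrite Eadd; last 2 first.
  - exact: gmax.
  - exact: good_scale _ (gmax _).
  by rewrite Escale ?mulN1r //; exact: gmax.
apply: Eext; [exact: m_ind | by case: (good_add (gmax (K.-1)%:R)
   (good_scale (-1) (gmax K%:R))) |].
move=> z /(SsetP T0)[_ _ [j [j1 j2 hj]]].
rewrite /ind_ge hj hK // !maxnat mulN1r -natrB; last lia.
congr (_%:R); case: leqP => h; lia.
Qed.

Lemma ind_K t K :
  (forall j : nat, (1 <= j)%N -> (t <= j%:R) = (K <= j)%N) ->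
  Ext P (ind_ge t) = Ext P (ind_ge K%:R).
Proof.
move=> hK; rewrite /Ext; congr (_ / _).
apply: Eext.
- by apply: measurable_funM; [exact: measurable_snd | exact: m_ind].
- by apply: measurable_funM; [exact: measurable_snd | exact: m_ind].
move=> z /(SsetP T0)[_ _ [j [j1 j2 hj]]].
by rewrite /ind_ge hj hK // ler_nat.
Qed.

Lemma ind_zero t : (forall j : nat, (j <= n.-1)%N -> ~~ (t <= j%:R)) ->
  Ex P (ind_ge t) = 0 /\ Ext P (ind_ge t) = 0.
Proof.
move=> h0.
have E : forall g : R * R -> R, measurable_fun setT g ->
   Ex P (fun z => g z * ind_ge t z) = 0.
  move=> g mg; rewrite -(Ex_cst P 0); apply: Eext.
  - by apply: measurable_funM => //; exact: m_ind.
  - exact: measurable_cst.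
  move=> z /(SsetP T0)[_ _ [j [j1 j2 hj]]].
  by rewrite /ind_ge hj (negbTE (h0 j j2)) mulr0.
split.
  have := E (fun _ => 1) (measurable_cst _).
  by under eq_fun do rewrite mul1r.
by rewrite /Ext E ?mul0r //; exact: measurable_snd.
Qed.

End Deg.
Lemma ind_cases (R : realType) (t : R) n : (1 < n)%N ->
  (exists K, [/\ (1 <= K)%N, (K <= n.-1)%N &
     forall j : nat, (1 <= j)%N -> (t <= j%:R) = (K <= j)%N]) \/
  (forall j : nat, (j <= n.-1)%N -> ~~ (t <= j%:R)).
Proof.
move=> hn.
case: (lerP t 1) => ht1.
  left; exists 1%N; split => //; first by rewrite -ltnS prednK // ltnW.
  by move=> j j1; rewrite j1 (le_trans ht1) // ler1n.
case: (lerP t (n.-1)%:R) => htn; last first.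
  by right => j hj; rewrite -ltNge; apply: le_lt_trans htn; rewrite ler_nat.
left.
have exP : exists k : nat, t <= k%:R by exists n.-1.
case: (ex_minnP exP) => K hK Kmin.
exists K; split.
- rewrite lt0n; apply/eqP => K0; move: hK; rewrite K0 => h.
  by have := lt_trans ltr01 (lt_le_trans ht1 h); rewrite ltxx.
- exact: Kmin.
move=> j j1; apply/idP/idP; first exact: Kmin.
by move=> Kj; apply: le_trans hK _; rewrite ler_nat.
Qed.

Lemma sum_strict (R : realType) (f g : nat -> R) N :
  (forall i, (i < N)%N -> f i <= g i) -> (exists i, (i < N)%N /\ f i < g i) ->
  \sum_(i < N) f i < \sum_(i < N) g i.
Proof.
elim: N => [|N IH] hle [i [hi hlt]]; first by [].
rewrite !big_ord_recr /=.
case: (ltngtP i N) => h.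
- apply: ltr_leD; last exact: hle.
  apply: IH; last by exists i.
  by move=> k hk; apply: hle; exact: ltnW.
- by move: hi; rewrite ltnS leqNgt h.
- subst i; apply: ler_ltD => //.
  by apply: ler_sum => k _; apply: hle; exact: leq_trans (ltn_ord k) _.
Qed.

Lemma sum_eq_all (R : realType) (f g : nat -> R) N :
  (forall i, (i < N)%N -> f i <= g i) -> \sum_(i < N) f i = \sum_(i < N) g i ->
  forall i, (i < N)%N -> f i = g i.
Proof.
move=> hle hs i hi; apply/eqP; rewrite eq_le hle //=.
rewrite leNgt; apply/negP => hlt.
have := @sum_strict R f g N hle (ex_intro _ i (conj hi hlt)).
by rewrite hs ltxx.
Qed.

Lemma convex_sq (R : realType) : convex_fun (fun r : R => r * r).
Proof.
move=> u v t /andP[t0 t1].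
have h : 0 <= t * (1 - t) * ((u - v) * (u - v)).
  by apply: mulr_ge0; [apply: mulr_ge0 => //; rewrite subr_ge0 | rewrite -expr2; exact: sqr_ge0].
lra.
Qed.

Lemma convex_maxk (R : realType) (k : R) : convex_fun (fun r : R => Num.max (r - k) 0).
Proof.
move=> u v t /andP[t0 t1].
have t1' : 0 <= 1 - t by rewrite subr_ge0.
rewrite ge_max; apply/andP; split.
  have h1 : t * (u - k) <= t * Num.max (u - k) 0 by rewrite ler_wpM2l // le_max lexx.
  have h2 : (1 - t) * (v - k) <= (1 - t) * Num.max (v - k) 0 by rewrite ler_wpM2l // le_max lexx.
  lra.
by apply: addr_ge0; apply: mulr_ge0 => //; rewrite le_max lexx orbT.
Qed.

Lemma Efst_eq (R : realType) (n : nat) (Theta : set R) (P P' : probability (R * R)%type R) :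
  compact Theta -> Theta `<=` `[0, +oo[ ->
  P (Sset n Theta) = 1%E -> P' (Sset n Theta) = 1%E ->
  (forall A : set R, measurable A -> P (A `*` setT) = P' (A `*` setT)) ->
  Ex P fst = Ex P' fst.
Proof.
move=> cT T0 PS PS' hA.
have mf : measurable_fun setT (fun z : R * R => Num.max z.1 0).
  by apply: measurable_maxr; [exact: measurable_fst | exact: measurable_cst].
have E (Q : probability (R * R)%type R) : Q (Sset n Theta) = 1%E ->
    Ex Q fst = fine (\int[pushforward Q fst]_y ((Num.max y 0)%:E)).
  move=> QS.
  rewrite (@Ex_ext R Q _ (mSset cT) QS fst (fun z => Num.max z.1 0)) //; last first.
    by move=> z /(SsetP T0)[_ h0 _]; rewrite max_l.
  rewrite /Ex ge0_integral_pushforward //.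
  - apply/measurable_EFinP; apply: measurable_maxr; [exact: measurable_id | exact: measurable_cst].
  - by move=> y _; rewrite lee_fin le_max lexx orbT.
rewrite (E P PS) (E P' PS'); congr fine.
apply: eq_measure_integral => A mA _.
change (P (fst @^-1` A) = P' (fst @^-1` A)).
rewrite (_ : fst @^-1` A = A `*` setT); first by rewrite hA.
by apply/seteqP; split => z /=; [move=> h; split|case].
Qed.
Theorem proposition8 (R : realType) (n : nat) (phi : R) (Theta : set R)
  (a c a' c' : R) (P P' : probability (R * R)%type R) :
  (2 <= n)%N ->
  compact Theta -> Theta `<=` `[0, +oo[ ->
  setting Theta n a c P -> setting Theta n a' c' P' ->
  (forall A : set R, measurable A -> P (A `*` setT) = P' (A `*` setT)) ->
  a' <= a -> c <= c' ->
  fosd_tilde P P' \/ mps P P' ->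
  a' < a \/ c < c' \/ strict_fosd_tilde P P' \/ strict_mps P P' ->
  forall x x' : R * R -> R,
    friend_eq Theta n a c phi P x ->
    friend_eq Theta n a' c' phi P' x' ->
  forall thi di di' : R,
    Theta thi -> degset n di -> degset n di' -> di' < di ->
    x' (thi, di) - x' (thi, di') < x (thi, di) - x (thi, di') /\
    Ufriend n a' c' phi P' x' thi di - Ufriend n a' c' phi P' x' thi di'
      < Ufriend n a c phi P x thi di - Ufriend n a c phi P x thi di'.
Proof.
move=> hn cT T0 st st' hA haa hcc h9 h10 x x' eqx eqx' thi di di' Tt Ddi Ddi' hdd.
have [[a0 c0] PS hs _ _] := st.
have [[a0' c0'] PS' hs' _ _] := st'.
have sp := @s_pos _ _ _ _ _ _ cT T0 st.
have sp' := @s_pos _ _ _ _ _ _ cT T0 st'.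
have ep := @e_pos _ _ _ _ _ _ cT T0 st.
have ee : Ex P fst = Ex P' fst := @Efst_eq _ _ _ _ _ cT T0 PS PS' hA.
have mm (Q : probability (R * R)%type R) (QS : Q (Sset n Theta) = 1%E) :
    1 <= Ex Q (fun z => z.2).
  rewrite -[X in X <= _](Ex_cst Q 1).
  apply: (@Ex_le R Q _ (mSset cT) QS); [exact: good_cst | exact: g_snd T0 |].
  by move=> z /(SsetP T0)[_ _ [j [j1 _ ->]]]; rewrite ler1n.
have fosd_le : fosd_tilde P P' -> Ext P' snd <= Ext P snd.
  move=> hf; rewrite (@s_sum _ _ _ P hn cT T0 PS) (@s_sum _ _ _ P' hn cT T0 PS').
  by apply: ler_sum => k _; exact: hf.
have mps_q : mps P P' -> Ex P' (fun z => z.2 * z.2) <= Ex P (fun z => z.2 * z.2).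
  by case=> _ hc; exact: (hc _ (@convex_sq R)).
have mps_le : mps P P' -> Ext P' snd <= Ext P snd.
  move=> hm; have hq := mps_q hm.
  have hm1 : Ex P (fun z => z.2) = Ex P' (fun z => z.2) by case: hm.
  rewrite /Ext hm1; apply: ler_wpM2r => //.
  by rewrite invr_ge0; exact: le_trans ler01 (mm P' PS').
have hss : Ext P' snd <= Ext P snd by case: h9; [exact: fosd_le | exact: mps_le].
have hstr : a' < a \/ c < c' \/ Ext P' snd < Ext P snd.
  case: h10 => [->|[->|[hsf|hsm]]]; [by left | by right; left | right; right | right; right].
  - case: hsf => hf [t ht].
    rewrite (@s_sum _ _ _ P hn cT T0 PS) (@s_sum _ _ _ P' hn cT T0 PS').
    apply: (@sum_strict R (fun k => Ext P' (ind_ge k.+1%:R)) (fun k => Ext P (ind_ge k.+1%:R))).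
      by move=> i _; exact: hf.
    case: (@ind_cases R t n hn) => [[K [K1 Kn hK]]|h0].
      exists K.-1; split; first by rewrite prednK.
      rewrite prednK //.
      by rewrite -(@ind_K _ _ _ P cT T0 PS t K hK) -(@ind_K _ _ _ P' cT T0 PS' t K hK).
    have [_ z1] := @ind_zero _ _ _ P cT T0 PS t h0.
    have [_ z2] := @ind_zero _ _ _ P' cT T0 PS' t h0.
    by move: ht; rewrite z1 z2 ltxx.
  - case: hsm => hm [t ht].
    rewrite lt_neqAle (mps_le hm) andbT; apply/negP => /eqP hseq.
    have hm1 : Ex P (fun z => z.2) = Ex P' (fun z => z.2) by case: hm.
    have m1 := mm P PS.
    have hq : Ex P (fun z => z.2 * z.2) = Ex P' (fun z => z.2 * z.2).
      move: hseq; rewrite /Ext hm1 => /(congr1 (fun r => r * Ex P' (fun z => z.2))).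
      by rewrite !divfK // gt_eqF // -hm1 (lt_le_trans ltr01).
    have hpi : forall k, (k < n.-1)%N ->
        Ex P' (fun z => Num.max (z.2 - k.+1%:R) 0) = Ex P (fun z => Num.max (z.2 - k.+1%:R) 0).
      apply: (@sum_eq_all R (fun k => Ex P' (fun z => Num.max (z.2 - k.+1%:R) 0))
                (fun k => Ex P (fun z => Num.max (z.2 - k.+1%:R) 0))).
        by move=> i _ /=; case: hm => _ hc; exact: (hc (fun r => Num.max (r - i.+1%:R) 0) (@convex_maxk R _)).
      move: hq; rewrite (@q_id _ _ _ P hn cT T0 PS) (@q_id _ _ _ P' hn cT T0 PS').
      have -> : Ex P [eta snd] = Ex P' [eta snd] by exact: hm1.
      move/addrI/mulfI => h; apply/esym/h.
      by rewrite pnatr_eq0.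
    have hpi2 : forall k, (k <= n.-1)%N ->
        Ex P' (fun z => Num.max (z.2 - k%:R) 0) = Ex P (fun z => Num.max (z.2 - k%:R) 0).
      case=> [_|k hk]; last exact: hpi.
      rewrite (@pi0 _ _ _ P cT T0 PS) (@pi0 _ _ _ P' cT T0 PS').
      by apply/esym; exact: hm1.
    apply: ht.
    case: (@ind_cases R t n hn) => [[K [K1 Kn hK]]|h0].
      rewrite (@ind_pi _ _ _ P hn cT T0 PS t K K1 hK) (@ind_pi _ _ _ P' hn cT T0 PS' t K K1 hK).
      by rewrite !hpi2 // (leq_trans (leq_pred _) Kn).
    have [z1 _] := @ind_zero _ _ _ P cT T0 PS t h0.
    have [z2 _] := @ind_zero _ _ _ P' cT T0 PS' t h0.
    by rewrite z1 z2.
have Xv := @X_val _ _ _ _ _ _ _ _ cT T0 st eqx.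
have Xv' := @X_val _ _ _ _ _ _ _ _ cT T0 st' eqx'.
have xf := @x_form _ _ _ _ _ _ _ _ cT T0 st eqx.
have xf' := @x_form _ _ _ _ _ _ _ _ cT T0 st' eqx'.
set e := Ex P fst in ep ee Xv.
set s := Ext P snd in sp hs hss hstr Xv.
set s' := Ext P' snd in sp' hs' hss hstr Xv'.
rewrite -ee in Xv'.
set X := Ext P x in Xv xf.
set X' := Ext P' x' in Xv' xf'.
have D0 : 0 < c - a * s by rewrite subr_gt0.
have D0' : 0 < c' - a' * s' by rewrite subr_gt0.
have hDD : c - a * s <= c' - a' * s'.
  have : a' * s' <= a * s by apply: ler_pM => //; exact: ltW.
  lra.
have hac : 0 <= a * c' by apply: mulr_ge0; exact: ltW.
have key : a' * c * (c - a * s) < a * c' * (c' - a' * s').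
  case: hstr => [h|[h|h]].
  - have h1 : a' * c < a * c' by nra.
    nra.
  - have h1 : a' * c < a * c' by nra.
    nra.
  - have h1 : a' * c <= a * c' by nra.
    have h2 : c - a * s < c' - a' * s'.
      have : a' * s' < a * s.
        by apply: le_lt_trans (_ : a' * s' <= a * s') _; [rewrite ler_pM2r | rewrite ltr_pM2l].
      lra.
    have p1 : a' * c * (c - a * s) <= a * c' * (c - a * s) by rewrite ler_pM2r.
    have p2 : a * c' * (c - a * s) < a * c' * (c' - a' * s') by rewrite ltr_pM2l // mulr_gt0.
    lra.
set A := a * X.
set A' := a' * X'.
have hA0 : 0 < A'.
  by rewrite /A' Xv'; apply: mulr_gt0 => //; exact: divr_gt0.
have hAA : A' <= A.
  have E : A - A' = e * (a * (c' - a' * s') - a' * (c - a * s)) / ((c - a * s) * (c' - a' * s')).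
    by rewrite /A /A' Xv Xv'; field; rewrite !gt_eqF.
  rewrite -subr_ge0 E; apply: divr_ge0; last by apply: mulr_ge0; exact: ltW.
  apply: mulr_ge0; first exact: ltW.
  rewrite subr_ge0; nra.
have hk : A' / c' < A / c.
  have E : A / c - A' / c' =
      e * (a * c' * (c' - a' * s') - a' * c * (c - a * s)) / (c * (c - a * s) * (c' * (c' - a' * s'))).
    by rewrite /A /A' Xv Xv'; field; rewrite !gt_eqF.
  rewrite -subr_gt0 E; apply: divr_gt0; last by apply: mulr_gt0; apply: mulr_gt0.
  by apply: mulr_gt0 => //; rewrite subr_gt0.
have d1 : 1 <= di' by case: Ddi' => j [j1 [_ ->]]; rewrite ler1n.
have hd0 : 0 < di - di' by rewrite subr_gt0.
have Ex1 : x (thi, di) - x (thi, di') = (di - di') * (A / c).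
  by rewrite !xf // /A; field; rewrite gt_eqF.
have Ex1' : x' (thi, di) - x' (thi, di') = (di - di') * (A' / c').
  by rewrite !xf' // /A'; field; rewrite gt_eqF.
have t0 : 0 <= thi by have := T0 _ Tt; rewrite /= in_itv /= andbT.
split.
  by rewrite Ex1 Ex1' ltr_pM2l.
have EU : Ufriend n a c phi P x thi di - Ufriend n a c phi P x thi di' =
    (di - di') * ((A / c) * (thi + (di + di') * A / 2)).
  by rewrite /Ufriend /EUfriend -/X !xf // /A; field; rewrite gt_eqF.
have EU' : Ufriend n a' c' phi P' x' thi di - Ufriend n a' c' phi P' x' thi di' =
    (di - di') * ((A' / c') * (thi + (di + di') * A' / 2)).
  by rewrite /Ufriend /EUfriend -/X' !xf' // /A'; field; rewrite gt_eqF.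
rewrite EU EU' ltr_pM2l //.
have w0 : 0 < thi + (di + di') * A' / 2.
  have q0 : 0 < (di + di') * A' / 2.
    by apply: divr_gt0 => //; apply: mulr_gt0 => //; lra.
  lra.
have ww : thi + (di + di') * A' / 2 <= thi + (di + di') * A / 2.
  rewrite lerD2l ler_pM2r // ler_wpM2l //; lra.
have k0 : 0 < A' / c' by apply: divr_gt0.
nra.
Qed.
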